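(* Let $n\ge2$, $\sigma\ge2$, and let $s$ be a random string of length $n$ with characters i.i.d. uniform over an alphabet of size $\sigma$; let $r$ be its number of maximal runs, $X=r-1$, $q=(2-\sigma)/\sigma$, and $\mathcal{K}(s)$ its peeling kernel. Then $\mathcal{K}(s)$ consists of exactly one distinct symbol iff $r$ is odd iff $X$ is even, and consists of exactly two distinct symbols otherwise. Hence \[\Pr\bigl(|\mathrm{alphabet}(\mathcal{K}(s))|=1\bigr)=\tfrac12\bigl(1+q^{n-1}\bigr),\] which equals $1/2$ exactly when $\sigma=2$, and for $\sigma\ge3$ converges to $1/2$ exponentially fast in $n$.
   Context: A maximal run of a string is a maximal block of consecutive equal symbols. Let $\texttt{@},\texttt{\$}$ be two distinct symbols not in the alphabet. For a string $s$ of length $n$ let $\hat s=\texttt{@}\,s\,\texttt{\$}$ (positions $1,\dots,n+2$); $\hat s[i..j)$ is the substring at positions $i,\dots,j-1$. The leading (trailing) run of a non-empty string is its longest prefix (suffix) consisting of one repeated symbol. The Flashback decomposition $\mathcal{F}(s)$ is the sequence of tokens (pairs $(\sigma,p)$) produced as follows, starting from active span $[lo,hi)=[1,n+3)$: if $lo\ge hi$, stop. Let $\ell$ be the leading-run length of $\hat s[lo..hi)$. If $\ell=hi-lo$, append $(\hat s[lo..hi),0)$ and stop. Otherwise let $\hat s[r'..hi)$ be the trailing run of $\hat s[lo..hi)$ and $\sigma=\hat s[lo..lo+\ell)\cdot\hat s[r'..hi)$; if $lo+\ell\ge r'$, append $(\sigma,0)$ and stop; otherwise append $(\sigma,\ell)$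 and repeat with $[lo+\ell,r')$. The peeling kernel $\mathcal{K}(s)$ is the symbol string of the last token of $\mathcal{F}(s)$, and $\mathrm{alphabet}(w)$ is the set of symbols occurring in $w$. *)

(* Defs.v *)
From mathcomp Require Import all_boot all_order all_algebra.
Set Implicit Arguments. Unset Strict Implicit. Unset Printing Implicit Defensive.
Import Order.TTheory GRing.Theory Num.Theory.

(* Symbols of the extended alphabet: None = '@', Some None = '$',
   Some (Some c) = the ordinary character c : 'I_sigma. *)
Definition Sym (sigma : nat) := option (option 'I_sigma).

Definition runs (T : eqType) (s : seq T) : nat :=
  match s with
  | [::] => 0
  | x :: t => (count id (pairmap (fun a b => a != b) x t)).+1
  end.

Definition hat (sigma : nat) (s : seq 'I_sigma) : seq (Sym sigma) :=
  None :: rcons (map (fun c => Some (Some c)) s) (Some None).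

Definition lead_run (T : eqType) (w : seq T) : nat :=
  match w with
  | [::] => 0
  | x :: t => (find (fun y => y != x) t).+1
  end.

(* The Flashback peeling on the current active span w = \hat s[lo..hi),
   indices relative to lo; fuel bounds the number of steps. *)
Fixpoint flash_rec (T : eqType) (fuel : nat) (w : seq T) : seq (seq T * nat) :=
  match fuel with
  | 0 => [::]
  | f.+1 =>
    if w is [::] then [::] else
    let l := lead_run w in
    if l == size w then [:: (w, 0)] else
    let r := size w - lead_run (rev w) in
    let sg := take l w ++ drop r w in
    if r <= l then [:: (sg, 0)]
    else (sg, l) :: flash_rec f (take (r - l) (drop l w))
  end.

(* Flashback decomposition F(s) (fuel size+1 is enough: each step shrinks the span) *)
Definition flashback (sigma : nat) (s : seq 'I_sigma) : seq (seq (Sym sigma) * nat) :=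
  flash_rec (size (hat s)).+1 (hat s).

Definition kernel (sigma : nat) (s : seq 'I_sigma) : seq (Sym sigma) :=
  (last ([::], 0) (flashback s)).1.

Definition alph_size (T : eqType) (w : seq T) : nat := size (undup w).

Definition prob_unif (n sigma : nat) (P : n.-tuple 'I_sigma -> bool) : rat :=
  (#|[set s : n.-tuple 'I_sigma | P s]|%:R / #|{: n.-tuple 'I_sigma}|%:R)%R.

Definition P1 (n sigma : nat) : rat :=
  prob_unif (fun s : n.-tuple 'I_sigma => alph_size (kernel s) == 1%N).

(* Main.v *)
Require Import Defs.
From mathcomp Require Import all_boot all_order all_algebra.
From mathcomp Require Import zify ring lra.
Import Order.TTheory GRing.Theory Num.Theory.


Section Comb.
Variable T : eqType.

Lemma runs_cons2 (x y : T) t : runs [:: x, y & t] = (x != y) + runs (y :: t).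
Proof. by rewrite /runs /= addnS. Qed.

Lemma runs_cat (x y : T) s t :
  runs ((x :: s) ++ (y :: t)) + (last x s == y) = runs (x :: s) + runs (y :: t).
Proof.
rewrite /runs cat_cons /= pairmap_cat count_cat /=.
case: (last x s == y); rewrite /= ?addn0 ?add0n; lia.
Qed.

Lemma runs_nseq (a : T) l : runs (nseq l.+1 a) = 1.
Proof.
elim: l => // l IH; rewrite [nseq _ _]/= runs_cons2 eqxx.
by rewrite -[_ :: nseq l a]/(nseq l.+1 a) IH.
Qed.

Lemma runs_lead (a : T) l u : (u = [::] \/ head a u != a) ->
  runs (nseq l.+1 a ++ u) = if u is [::] then 1 else (runs u).+1.
Proof.
case: u => [_|y u [//|/= ya]]; first by rewrite cats0 runs_nseq.
have R := runs_cat a y (nseq l a) u.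
rewrite -[_ :: nseq l a]/(nseq l.+1 a) runs_nseq in R.
have E : last a (nseq l a) = a by clear R; elim: l.
by rewrite E eq_sym (negbTE ya) addn0 in R; exact: R.
Qed.

Lemma lead_run_nseq (a : T) l u : (u = [::] \/ head a u != a) ->
  lead_run (nseq l.+1 a ++ u) = l.+1.
Proof.
move=> H; rewrite /lead_run /= find_cat.
have -> : has (fun y => y != a) (nseq l a) = false.
  by elim: l => //= l ->; rewrite eqxx.
rewrite size_nseq; case: H => [->|]; first by rewrite addn0.
by case: u => [|y u] /= ya; [rewrite addn0 | rewrite ya addn0].
Qed.

Lemma decomp_left (w : seq T) : w != [::] ->
  exists a l u, w = nseq l.+1 a ++ u /\ (u = [::] \/ head a u != a).
Proof.
elim: w => // x t IH _.
case: t IH => [|y t] IH; first by exists x, 0, [::]; split => //; left.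
have [a [l [u [E H]]]] := IH isT.
case: (eqVneq x a) => [xa|xa].
  by exists a, l.+1, u; split; [rewrite E xa | exact H].
exists x, 0, (y :: t); split => //; right; rewrite E /=.
by rewrite eq_sym.
Qed.

Lemma decomp_right (w : seq T) : w != [::] ->
  exists b l v, w = v ++ nseq l.+1 b /\ (v = [::] \/ last b v != b).
Proof.
move=> wn; have : rev w != [::] by rewrite -size_eq0 size_rev size_eq0.
move=> /decomp_left [b [l [u [E H]]]].
exists b, l, (rev u); split.
  by rewrite -(revK w) E rev_cat rev_nseq.
case: H => [->|H]; [by left | right].
clear E; case: u H => [|y u] //=; by rewrite rev_cons last_rcons.
Qed.

Lemma flash_rec_eq f (w : seq T) : w != [::] ->
  flash_rec f.+1 w =
    let l := lead_run w in
    if l == size w then [:: (w, 0)] else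
    let r := size w - lead_run (rev w) in
    let sg := take l w ++ drop r w in
    if r <= l then [:: (sg, 0)]
    else (sg, l) :: flash_rec f (take (r - l) (drop l w)).
Proof. by case: w. Qed.

Lemma flash_rec_nil f (w : seq T) : w != [::] -> flash_rec f.+1 w != [::].
Proof.
move=> wn; rewrite flash_rec_eq //=.
by case: ifP => // _; case: ifP.
Qed.

Lemma alph_nseq2 (a b : T) l l' : a != b ->
  alph_size (nseq l.+1 a ++ nseq l'.+1 b) = 2.
Proof.
move=> ab; rewrite /alph_size.
have U : uniq [:: a; b] by rewrite /= inE ab.
apply/eqP; rewrite -[2]/(size [:: a; b]) -(uniq_size_uniq U) ?undup_uniq // => x.
by rewrite mem_undup mem_cat !mem_nseq !inE.
Qed.

Lemma alph_nseq1 (a : T) l : alph_size (nseq l.+1 a) = 1.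
Proof.
rewrite /alph_size.
have U : uniq [:: a] by [].
apply/eqP; rewrite -[1]/(size [:: a]) -(uniq_size_uniq U) ?undup_uniq // => x.
by rewrite mem_undup !mem_nseq !inE.
Qed.

Lemma last_cons_ne (A : Type) (d p : A) (s : seq A) : ~~ nilp s -> last d (p :: s) = last d s.
Proof. by case: s. Qed.

Lemma head_rev_cat (x : T) v s : v != [::] -> head x (rev v ++ s) = last x v.
Proof. by case/lastP: v => // v z _; rewrite rev_rcons last_rcons. Qed.

Lemma last_ne (A : Type) (x d : A) (s : seq A) : ~~ nilp s -> last x s = last d s.
Proof. by case: s. Qed.

Lemma key f (w : seq T) d : w != [::] -> size w < f ->
  alph_size (last d (flash_rec f w)).1 = if odd (runs w) then 1 else 2.
Proof.
elim: f w => // f IH w wn sw.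
have [a [l [u [E H]]]] := decomp_left _ wn.
have Hl : lead_run w = l.+1 by rewrite E; exact: lead_run_nseq.
rewrite flash_rec_eq //= Hl.
case: u E H => [|y u0] E H.
  by rewrite E cats0 size_nseq eqxx [last _ _]/= runs_nseq alph_nseq1.
set u := y :: u0 in E H.
have un : u != [::] by [].
have [b [l' [v [Eu Hv]]]] := decomp_right _ un.
have hab : head a u != a by case: H.
have Er : runs w = (runs u).+1 by rewrite E runs_lead.
have Hs : size w = l.+1 + size v + l'.+1 by rewrite E Eu !size_cat !size_nseq addnA.
have Hrev : lead_run (rev w) = l'.+1.
  rewrite E Eu !rev_cat !rev_nseq -catA lead_run_nseq //.
  case: Hv => [Ev|Hv]; right.
    move: hab; rewrite Eu Ev /= eq_sym; by [].
  have vn : v != [::] by apply/eqP => v0; move: Hv; rewrite v0 eqxx.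
  by rewrite head_rev_cat.
rewrite Hs Hrev.
have -> : (l.+1 == l.+1 + size v + l'.+1) = false by apply/negbTE; lia.
have -> : l.+1 + size v + l'.+1 - l'.+1 = l.+1 + size v by lia.
have Et : take l.+1 w = nseq l.+1 a by rewrite E take_size_cat // size_nseq.
have Ed : drop (l.+1 + size v) w = nseq l'.+1 b.
  by rewrite E Eu catA drop_size_cat // size_cat size_nseq.
rewrite Et Ed.
case: v Eu Hv Hs Ed => [|z v] Eu Hv Hs Ed.
  rewrite addn0 leqnn /=.
  have ab : a != b by move: hab; rewrite Eu /= eq_sym.
  by rewrite alph_nseq2 // Er Eu cat0s runs_nseq.
set v' := z :: v in Eu Hv Hs Ed *.
have -> : (l.+1 + size v' <= l.+1) = false by rewrite /= ; apply/negbTE; lia.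
have -> : l.+1 + size v' - l.+1 = size v' by lia.
have Em : take (size v') (drop l.+1 w) = v'.
  by rewrite E drop_size_cat ?size_nseq // Eu take_size_cat.
rewrite Em /=.
case: f IH sw => [|f] IH sw; first by move: sw; rewrite Hs /=; lia.
rewrite (last_ne _ _ d) ?(flash_rec_nil, nilpE) // IH //; last by move: sw; rewrite Hs; lia.
have hvb : last b v' != b by case: Hv.
have Ru : runs u = (runs v').+1.
  have R := runs_cat z b v (nseq l' b).
  rewrite -[b :: nseq l' b]/(nseq l'.+1 b) runs_nseq in R.
  move: hvb; rewrite /v' => /negbTE hvb; rewrite hvb addn0 addn1 in R.
  by rewrite Eu.
by rewrite Er Ru /=; rewrite negbK.
Qed.
End Comb.

Lemma runs_map (T U : eqType) (g : T -> U) (s : seq T) : injective g ->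
  runs (map g s) = runs s.
Proof.
move=> gi; case: s => // x t /=; congr S.
elim: t x => //= y t IH x; by rewrite IH inj_eq.
Qed.

Lemma runs_hat sigma (s : seq 'I_sigma) : s != [::] -> runs (hat s) = (runs s).+2.
Proof.
case: s => // x t _; rewrite /hat map_cons rcons_cons runs_cons2 add1n.
congr S; rewrite -cats1.
have R := runs_cat _ (Some (Some x)) (Some None : Sym sigma) (map (fun c => Some (Some c)) t) [::].
have L : (Some (Some (last x t)) == Some None :> Sym sigma) = false by [].
rewrite (last_map (fun c => Some (Some c)) t x) L addn0 in R.
have M := @runs_map _ _ (fun c => Some (Some c) : Sym sigma) (x :: t).
rewrite map_cons in M.
by rewrite R M ?addn1 // => c c' [].
Qed.

Lemma part1 sigma n (s : n.-tuple 'I_sigma) : (2 <= n)%N ->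
     (alph_size (kernel s) == 1%N = odd (runs s)) /\
     (odd (runs s) = ~~ odd (runs s).-1) /\
     (~~ odd (runs s) -> alph_size (kernel s) = 2%N).
Proof.
move=> n2.
have sn : (s : seq _) != [::] by rewrite -size_eq0 size_tuple; case: n n2 {s}.
have K : alph_size (kernel s) = if odd (runs s) then 1 else 2.
  rewrite /kernel /flashback key; last by [].
  - by rewrite runs_hat //= negbK.
  - by [].
have : 0 < runs s by case: (tval s) sn.
case: (runs s) K => // r K _; rewrite K /=.
by case: (odd r).
Qed.
Module Prob.
Local Open Scope ring_scope.

Lemma big_tuple_cons (T : finType) n (F : n.+1.-tuple T -> rat) :
  \sum_(t : n.+1.-tuple T) F t = \sum_(x : T) \sum_(u : n.-tuple T) F [tuple of x :: u].
Proof.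
rewrite pair_big /=.
rewrite (reindex (fun p : T * n.-tuple T => [tuple of p.1 :: p.2])) //=.
exists (fun t => (thead t, [tuple of behead t])).
  by move=> [x u] _ /=; congr pair; apply: val_inj.
by move=> t _; rewrite [RHS]tuple_eta.
Qed.

Lemma sum_pick {T : finType} (a : T) (G : T -> rat) :
  \sum_z (a == z)%:R * G z = G a.
Proof.
rewrite (bigD1 a) //= eqxx mul1r big1 ?addr0 // => z za.
by rewrite eq_sym (negbTE za) mul0r.
Qed.

Lemma tuple_seq_eta (T : Type) n (u : n.+1.-tuple T) :
  (u : seq T) = thead u :: behead u.
Proof. by case: u => [[|x s] //= _]. Qed.

Definition sgn (T : eqType) (t : seq T) : rat := (-1) ^+ (runs t).-1.
Arguments sgn {T}.

Lemma sgn_cons (T : eqType) n y (u : n.+1.-tuple T) :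
  sgn (y :: u) = (-1) ^+ (y != thead u) * sgn u.
Proof.
rewrite /sgn tuple_seq_eta runs_cons2 -exprD; congr (_ ^+ _).
by rewrite /runs; case: (y != thead u).
Qed.

Lemma sum_sign sigma (y : 'I_sigma) :
  \sum_(z : 'I_sigma) (-1) ^+ (y != z) = 2 - sigma%:R :> rat.
Proof.
have E : forall z : 'I_sigma, (-1) ^+ (y != z) = 2 * (y == z)%:R - 1 :> rat.
  by move=> z; case: (y == z).
rewrite (eq_bigr _ (fun z _ => E z)) sumrB -mulr_sumr.
have -> : \sum_(i : 'I_sigma) (y == i)%:R = 1 :> rat.
  by rewrite -[RHS](sum_pick y (fun _ => 1)); apply: eq_bigr => z _; rewrite mulr1.
by rewrite sumr_const card_ord mulr1.
Qed.

Lemma signsum sigma n (y : 'I_sigma) :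
  \sum_(t : n.+1.-tuple 'I_sigma) (thead t == y)%:R * sgn t = (2 - sigma%:R) ^+ n.
Proof.
elim: n y => [|n IH] y.
  rewrite big_tuple_cons.
  transitivity (\sum_(x : 'I_sigma) (y == x)%:R * (1 : rat)).
    apply: eq_bigr => x _.
    rewrite (eq_bigr (fun _ => (x == y)%:R)); last first.
      by move=> u _; rewrite tuple0 /sgn /= mulr1.
    rewrite (bigD1 [tuple]) // big1 /=; first by rewrite addr0 eq_sym mulr1.
    by move=> u /= /eqP []; exact: tuple0.
  by rewrite sum_pick.
rewrite big_tuple_cons.
transitivity (\sum_(x : 'I_sigma) (y == x)%:R *
   \sum_(u : n.+1.-tuple 'I_sigma) (-1) ^+ (x != thead u) * sgn u).
  apply: eq_bigr => x _; rewrite mulr_sumr; apply: eq_bigr => u _.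
  by rewrite sgn_cons /= eq_sym.
rewrite sum_pick.
transitivity (\sum_(u : n.+1.-tuple 'I_sigma) \sum_(z : 'I_sigma)
   (thead u == z)%:R * ((-1) ^+ (y != z) * sgn u)).
  by apply: eq_bigr => u _; rewrite sum_pick.
rewrite exchange_big /=.
transitivity (\sum_(z : 'I_sigma) (-1) ^+ (y != z) * (2 - sigma%:R) ^+ n : rat).
  apply: eq_bigr => z _; rewrite -(IH z) mulr_sumr; apply: eq_bigr => u _.
  by rewrite mulrCA.
by rewrite -mulr_suml sum_sign exprS.
Qed.

Lemma card_sum_rat (T : finType) (P : pred T) :
  (#|[set s | P s]|%:R : rat) = \sum_s (P s)%:R.
Proof.
rewrite -sum1_card natr_sum big_mkcond /=; apply: eq_bigr => s _.
by rewrite inE; case: (P s).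
Qed.

Lemma P1_eq sigma m : (2 <= sigma)%N -> (1 <= m)%N ->
  P1 m.+1 sigma = 1 / 2 * (1 + ((2 - sigma%:R) / sigma%:R) ^+ m).
Proof.
move=> s2 m1.
rewrite /P1 /prob_unif card_tuple card_ord.
have -> : #|[set s : m.+1.-tuple 'I_sigma | alph_size (kernel s) == 1%N]| =
          #|[set s : m.+1.-tuple 'I_sigma | odd (runs s)]|.
  by apply: eq_card => s; rewrite !inE; case: (@part1 _ _ s (m1 : (1 < m.+1)%N)).
rewrite card_sum_rat.
set c := \sum_s _.
have H1 : \sum_(s : m.+1.-tuple 'I_sigma) sgn s = 2 * c - (sigma ^ m.+1)%:R.
  have -> : (sigma ^ m.+1)%:R = \sum_(s : m.+1.-tuple 'I_sigma) (1 : rat).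
    by rewrite sumr_const card_tuple card_ord.
  rewrite /c mulr_sumr -sumrB; apply: eq_bigr => s _.
  have : (0 < runs s)%N.
    by case: s => [[|x t]] //=.
  rewrite /sgn; case: (runs s) => // r _ /=.
  rewrite -signr_odd; case: (odd r); rewrite /= ?expr0 ?expr1; lra.
have H2 : \sum_(s : m.+1.-tuple 'I_sigma) sgn s = sigma%:R * (2 - sigma%:R) ^+ m.
  transitivity (\sum_(s : m.+1.-tuple 'I_sigma) \sum_(y : 'I_sigma) (thead s == y)%:R * sgn s).
    by apply: eq_bigr => s _; rewrite sum_pick.
  rewrite exchange_big /=.
  rewrite (eq_bigr (fun _ => (2 - sigma%:R) ^+ m)); last by move=> y _; rewrite signsum.
  by rewrite sumr_const card_ord mulr_natl.
have Hc : c = (sigma%:R ^+ m.+1 + sigma%:R * (2 - sigma%:R) ^+ m) / (2 : rat).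
  by rewrite -H2 H1 natrX; field.
rewrite Hc natrX expr_div_n exprS.
have s0 : sigma%:R != 0 :> rat by rewrite pnatr_eq0 -lt0n; lia.
have sm : sigma%:R ^+ m != 0 :> rat by rewrite expf_neq0.
field.
by apply/andP.
Qed.
End Prob.
Import Prob.


Theorem corollaryA2 (sigma : nat) : (2 <= sigma)%N ->
  (forall (n : nat) (s : n.-tuple 'I_sigma), (2 <= n)%N ->
     (alph_size (kernel s) == 1%N = odd (runs s)) /\
     (odd (runs s) = ~~ odd (runs s).-1) /\
     (~~ odd (runs s) -> alph_size (kernel s) = 2%N)) /\
  (forall n : nat, (2 <= n)%N ->
     P1 n sigma = (1 / 2 * (1 + ((2 - sigma%:R) / sigma%:R) ^+ n.-1))%R) /\
  (forall n : nat, (2 <= n)%N -> (P1 n sigma = 1 / 2)%R <-> sigma = 2%N) /\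
  ((3 <= sigma)%N -> exists (C rho : rat), (0 < C)%R /\ (0 <= rho)%R /\ (rho < 1)%R /\
     forall n : nat, (2 <= n)%N -> (`|P1 n sigma - 1 / 2| <= C * rho ^+ n)%R).
Proof.
move=> s2.
have s0 : (sigma%:R != 0 :> rat)%R by rewrite pnatr_eq0 -lt0n; lia.
split; first by move=> n s n2; exact: part1.
split; first by case=> [|m] // n2; rewrite P1_eq.
split.
  case=> [|m] // n2; rewrite P1_eq //; split.
    move=> H.
    have Hq : (((2 - sigma%:R) / sigma%:R) ^+ m = 0 :> rat)%R by lra.
    move/eqP: Hq; rewrite expf_eq0 (n2 : (0 < m)%N) /= mulf_eq0 invr_eq0 (negbTE s0) orbF.
    rewrite subr_eq0 => /eqP H2.
    by apply/eqP; rewrite -(eqr_nat rat) -H2.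
  move=> E; subst sigma.
  have -> : ((2 - 2%:R) / 2%:R = 0 :> rat)%R by rewrite subrr mul0r.
  by rewrite expr0n; case: m n2 => //= m _; rewrite addr0 mulr1.
move=> s3.
set rho : rat := (1 - 2 / sigma%:R)%R.
have s3r : (3 <= sigma%:R :> rat)%R by rewrite (ler_nat rat 3).
have rp : (0 < rho)%R.
  rewrite /rho subr_gt0 ltr_pdivrMr; last by lra.
  lra.
exists (1 / 2 / rho)%R, rho; split; first by rewrite divr_gt0.
split; first by rewrite ltW.
split; first by rewrite /rho; rewrite ltrBlDr ltrDl divr_gt0 //; lra.
case=> [|m] // n2; rewrite P1_eq //.
have Hq : ((2 - sigma%:R) / sigma%:R = - rho :> rat)%R.
  by rewrite /rho; field.
rewrite Hq.
have -> : (1 / 2 * (1 + (- rho) ^+ m) - 1 / 2 = 1 / 2 * (- rho) ^+ m :> rat)%R by ring.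
rewrite normrM normrX normrN (gtr0_norm rp) ger0_norm; last by lra.
rewrite exprS; rewrite le_eqVlt; apply/orP; left; apply/eqP; field.
by rewrite gt_eqF.
Qed.
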